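(* Let $\varphi:\mathbb R\to\mathbb R$ be a continuous mapping with $\sup_{x\in\mathbb R}\#\varphi^{-1}(x)<\infty$ and $U(\varphi)<\infty$. Then for any $a\in\mathbb R$ and $b>0$, the closed set $\varphi^{-1}([a-b,a+b])$ is a finite disjoint union of closed intervals $J_1,\dots,J_r$. Moreover, \[\sum_{i=1}^r|J_i|\le2\lceil b\rceil U(\varphi)\qquad\text{and}\qquad r\le\sup_{x\in\mathbb R}\#\varphi^{-1}(x),\] where $\lceil x\rceil$ is the smallest integer greater than or equal to $x$.
   Context: Notation: $|\cdot|$ is Lebesgue measure and $\#$ is cardinality. Definition: $U(\varphi)=\sup_{|I|=1}|\varphi^{-1}(I)|$, the supremum over closed intervals $I\subset\mathbb R$ of length $1$. *)

(* Defs.v *)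
From HB Require Import structures.
From mathcomp Require Import all_boot all_order all_algebra.
From mathcomp Require Import finmap.
From mathcomp Require Import all_classical all_reals all_analysis.
Set Implicit Arguments. Unset Strict Implicit. Unset Printing Implicit Defensive.
Import Order.TTheory GRing.Theory Num.Theory.
Import numFieldNormedType.Exports.
Local Open Scope classical_set_scope.
Local Open Scope ring_scope.

Definition fiber_card (R : realType) (phi : R -> R) (x : R) : \bar R :=
  if pselect (finite_set [set t | phi t = x])
  then ((#|` fset_set [set t | phi t = x]|%fset)%:R)%:E
  else +oo%E.

Definition fiber_sup (R : realType) (phi : R -> R) : \bar R :=
  ereal_sup (range (fiber_card phi)).

Definition Uphi (R : realType) (phi : R -> R) : \bar R :=
  ereal_sup [set (@lebesgue_measure R) (phi @^-1` `[x, x + 1]) | x in [set: R]].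

(* Main.v *)
Require Import Defs.
From HB Require Import structures.
From mathcomp Require Import all_boot all_order all_algebra finmap.
From mathcomp Require Import all_classical all_reals all_analysis.
From mathcomp Require Import lra.
Import Order.TTheory GRing.Theory Num.Theory.
Import numFieldNormedType.Exports.
Local Open Scope classical_set_scope.
Local Open Scope ring_scope.
Set Implicit Arguments.

Lemma ray_l_inf (R : realType) (t : R) : (@lebesgue_measure R `]-oo, t]%classic = +oo)%E.
Proof. by rewrite lebesgue_measure_itv /= ltNyr. Qed.
Lemma ray_r_inf (R : realType) (t : R) : (@lebesgue_measure R `[t, +oo[%classic = +oo)%E.
Proof. by rewrite lebesgue_measure_itv /= ltry. Qed.
Lemma seg_meas (R : realType) (c d : R) : c <= d -> (@lebesgue_measure R `[c, d]%classic = (d - c)%:E)%E.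
Proof.
move=> cd; rewrite lebesgue_measure_itv /= lte_fin.
case: ltP => h; first by rewrite EFinB.
have -> : d = c by apply/eqP; rewrite eq_le cd h.
by rewrite subrr.
Qed.

Lemma cover_nat (R : realType) (n : nat) (x : R) : (0 < n)%N -> 0 <= x <= n%:R ->
  exists2 k, (k < n)%N & k%:R <= x <= k%:R + 1.
Proof.
elim: n => // n IH _ /andP[x0 xn].
case: n IH xn => [|n] IH xn.
  by exists 0%N => //; rewrite x0 add0r xn.
case: (leP x n.+1%:R) => h.
  by have [k kn hk] := IH isT (introT andP (conj x0 h)); exists k => //; rewrite ltnS ltnW.
by exists n.+1 => //; rewrite (ltW h) natr1.
Qed.

Lemma S_bound (R : realType) (phi : R -> R) (hc : continuous phi) (a b : R) (hb : 0 < b) :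
  (@lebesgue_measure R (phi @^-1` `[(a - b)%R, (a + b)%R]%classic) <=
     (2 * (Num.ceil b)%:~R)%:E * Uphi phi)%E.
Proof.
have [n hn] : exists n : nat, Num.ceil b = n%:Z.
  by exists `|Num.ceil b|%N; rewrite gez0_abs // ceil_ge0 (lt_trans _ hb) ?ltrN10.
have n0 : (0 < n)%N.
  by rewrite -(ltz_nat 0) -hn ceil_gt0.
have bn : b <= n%:R by rewrite -[n%:R]/((n%:Z)%:~R) -hn ceil_ge.
rewrite hn -[(n%:Z)%:~R]/(n%:R) -natrM.
set K := (2 * n)%N.
have mcl : forall x y : R, measurable (phi @^-1` `[x, y]%classic).
  move=> x y; apply: measurable_realfun.closed_measurable.
  apply: preimage_closed; first by move=> ? _; exact: hc.
  exact: interval_closed.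
pose A := fun k : nat => phi @^-1` `[a - b + k%:R, a - b + k%:R + 1]%classic.
apply: (@le_trans _ _ (\sum_(k < K) lebesgue_measure (A k))%E).
  apply: content_subadditive; [by move=> k _; exact: mcl | exact: mcl |].
  rewrite -bigcup_mkord => t /=; rewrite in_itv /= => /andP[h1 h2].
  have [k kK hk] : exists2 k, (k < K)%N & k%:R <= phi t - (a - b) <= k%:R + 1.
    apply: cover_nat; first by rewrite /K muln_gt0.
    rewrite subr_ge0 h1 /= lerBlDl (le_trans h2) //.
    rewrite /K natrM -addrA lerD2l; lra.
  exists k => //.
  rewrite /A /= in_itv /=.
  move: hk => /andP[k1 k2]; apply/andP; split; lra.
apply: (@le_trans _ _ (\sum_(k < K) Uphi phi)%E).
  apply: lee_sum => k _; apply: ereal_sup_ubound.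
  by exists (a - b + k%:R).
by rewrite sumr_const card_ord mule_natl.
Qed.

Definition blo (bs : seq nat) (i : nat) : nat :=
  if i is i'.+1 then (nth 0 bs i').+1 else 0.
Definition bhi (bs : seq nat) (M i : nat) : nat :=
  if (i < size bs)%N then nth 0 bs i else M.


Lemma beta_mono (bs : seq nat) i j : sorted ltn bs -> (i < j < size bs)%N -> (nth 0 bs i < nth 0 bs j)%N.
Proof.
move=> hs /andP[ij js].
by apply: (sorted_ltn_nth ltn_trans) => //; rewrite inE (ltn_trans ij).
Qed.

Lemma beta_monoW (bs : seq nat) i j : sorted ltn bs -> (i <= j < size bs)%N -> (nth 0 bs i <= nth 0 bs j)%N.
Proof.
move=> hs /andP[]; rewrite leq_eqVlt => /orP[/eqP -> //|ij js].
by apply: ltnW; apply: beta_mono => //; rewrite ij js.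
Qed.

Lemma beta_lt (bs : seq nat) M i : all (fun x => x < M)%N bs -> (i < size bs)%N -> (nth 0 bs i < M)%N.
Proof. by move=> /allP h hi; apply: h; rewrite mem_nth. Qed.

Lemma F1 bs M i : sorted ltn bs -> all (fun x => x < M)%N bs -> (i <= size bs)%N ->
  (blo bs i <= bhi bs M i)%N /\ (bhi bs M i <= M)%N.
Proof.
move=> hs ha hi; split; last first.
  by rewrite /bhi; case: ifP => // h; rewrite ltnW // beta_lt.
case: i hi => [|i] hi //=; rewrite /bhi.
case: ifP => h; first by apply: beta_mono => //; rewrite ltnSn h.
exact: beta_lt.
Qed.

Lemma F2 bs M i j : sorted ltn bs -> (i < j <= size bs)%N -> (bhi bs M i < blo bs j)%N.
Proof.
move=> hs /andP[ij jn].
case: j ij jn => [//|j] ij jn /=.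
have -> : bhi bs M i = nth 0 bs i by rewrite /bhi (leq_trans ij jn).
by rewrite ltnS; apply: beta_monoW => //; rewrite -ltnS ij.
Qed.

Lemma F3 bs M i k : sorted ltn bs -> all (fun x => x < M)%N bs -> (i <= size bs)%N ->
  (blo bs i <= k < bhi bs M i)%N -> k \notin bs.
Proof.
move=> hs ha hi /andP[h1 h2]; apply/negP => kb.
have xn : (index k bs < size bs)%N by rewrite index_mem.
have ek := nth_index 0 kb.
case: (ltnP (index k bs) i) => hx.
  case: i hi hx h1 h2 => [//|i] hi hx h1 h2.
  move: h1; rewrite /= -ek ltnNge => /negP; apply.
  by apply: beta_monoW => //; rewrite -ltnS hx.
move: h2; rewrite /bhi; case: ifP => h; last by rewrite (leq_ltn_trans hx xn) in h.
rewrite -ek ltnNge => /negP; apply.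
by apply: beta_monoW => //; rewrite hx xn.
Qed.

Lemma F4 bs M k : sorted ltn bs -> all (fun x => x < M)%N bs -> (k <= M)%N ->
  exists2 i, (i <= size bs)%N & (blo bs i <= k <= bhi bs M i)%N.
Proof.
move=> hs ha kM.
exists (find (fun x => k <= x)%N bs); first exact: find_size.
apply/andP; split.
  case hf: (find _ bs) => [//|i] /=.
  have := @before_find _ 0 (fun x => k <= x)%N bs i.
  by rewrite hf ltnSn ltnNge => /(_ isT) ->.
rewrite /bhi; case: ifP => // h.
by have := @nth_find _ 0 (fun x => k <= x)%N bs; rewrite has_find h => /(_ isT).
Qed.

Lemma F5 bs M i : (bhi bs M i < M)%N -> bhi bs M i \in bs.
Proof.
by rewrite /bhi; case: ifP => h; [rewrite mem_nth | rewrite ltnn].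
Qed.

Lemma ivt_strict (R : realType) (f : R -> R) (hc : continuous f) (x y v : R) :
  x < y -> Num.min (f x) (f y) < v < Num.max (f x) (f y) ->
  exists z, x < z < y /\ f z = v.
Proof.
move=> xy /andP[h1 h2].
have hw : {within `[x, y], continuous f} by apply: continuous_subspaceT.
have [c] := IVT (ltW xy) hw (introT andP (conj (ltW h1) (ltW h2))).
rewrite in_itv /= => /andP[xc cy] fc.
exists c; split => //.
have hx : c != x.
  apply/eqP => ex; move: h1 h2; rewrite -fc ex.
  by case: (leP (f x) (f y)) => ?; rewrite ?ltxx //= => _; rewrite ?ltxx //.
have hy : c != y.
  apply/eqP => ey; move: h1 h2; rewrite -fc ey.
  by case: (leP (f x) (f y)) => ?; rewrite ?ltxx //=.
by rewrite !lt_neqAle xc cy eq_sym hx hy.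
Qed.

Arguments ivt_strict {R f} hc {x y v}.

Lemma between (R : realType) (p q v : R) :
  (p < v < q) || (q < v < p) -> Num.min p q < v < Num.max p q.
Proof. by case/orP=> /andP[h1 h2]; rewrite gt_min lt_max h1 h2 ?orbT. Qed.
Arguments between {R p q v}.

Lemma sc_thr (R : realType) (f : R -> R) (hc : continuous f) (x y v : R) :
  x <= y -> (forall z, x <= z <= y -> f z != v) -> (f x < v) = (f y < v).
Proof.
move=> xy hz.
case: (eqVneq x y) => [-> //|nxy].
have xy' : x < y by rewrite lt_neqAle nxy.
have fxv : f x != v by apply: hz; rewrite lexx xy.
have fyv : f y != v by apply: hz; rewrite lexx xy.
case: (ltP (f x) v) => h1; case: (ltP (f y) v) => h2 //.
- have h2' : v < f y by rewrite lt_neqAle eq_sym fyv h2.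
  have [z [/andP[z1 z2] fz]] := ivt_strict hc xy' (between (introT orP (or_introl (introT andP (conj h1 h2'))))).
  by move: (hz z); rewrite (ltW z1) (ltW z2) fz eqxx => /(_ isT).
- have h1' : v < f x by rewrite lt_neqAle eq_sym fxv h1.
  have [z [/andP[z1 z2] fz]] := ivt_strict hc xy' (between (introT orP (or_intror (introT andP (conj h2 h1'))))).
  by move: (hz z); rewrite (ltW z1) (ltW z2) fz eqxx => /(_ isT).
Qed.

Lemma fiber_le (R : realType) (phi : R -> R) (hfib : (fiber_sup phi < +oo)%E) (v : R) (l : seq R) :
  uniq l -> (forall t, t \in l -> phi t = v) -> (((size l)%:R)%:E <= fiber_sup phi)%E.
Proof.
move=> ul hl.
have hle : (fiber_card phi v <= fiber_sup phi)%E.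
  by apply: ereal_sup_ubound; exists v.
move: hle; rewrite /fiber_card; case: pselect => fin h; last first.
  by rewrite ltNge h in hfib.
apply: le_trans h; rewrite lee_fin ler_nat.
apply: uniq_leq_size => // t tl; rewrite in_fset_set // inE /=; exact: hl.
Qed.

Lemma pos_min (R : realType) (g : nat -> R) n : (forall j, (j <= n)%N -> 0 < g j) ->
  exists2 d : R, 0 < d & forall j, (j <= n)%N -> d < g j.
Proof.
elim: n => [|n IH] hg.
  exists (g 0%N / 2); first by rewrite divr_gt0 // hg.
  move=> j; rewrite leqn0 => /eqP ->; have := hg 0%N isT; lra.
have [d d0 hd] := IH (fun j hj => hg j (leqW hj)).
have gn := hg n.+1 (leqnn _).
exists (Num.min d (g n.+1 / 2)).
  by rewrite lt_min d0 divr_gt0.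
move=> j; rewrite leq_eqVlt => /orP[/eqP ->|hj].
  by rewrite gt_min; apply/orP; right; lra.
by rewrite gt_min hd.
Qed.

Lemma path_mkseq (T : Type) (r : rel T) (f : nat -> T) n k :
  (forall i, (k <= i)%N -> (i < k + n)%N -> r (f i) (f i.+1)) ->
  path r (f k) (map f (iota k.+1 n)).
Proof.
elim: n k => [//|n IH] k h /=.
rewrite (h k) ?leqnn ?addnS ?ltnS ?leq_addr //=.
apply: IH => i ki ikn; apply: h; first exact: ltnW.
by rewrite addnS -addSn.
Qed.

Lemma sorted_mkseq (T : Type) (r : rel T) (f : nat -> T) n :
  (forall i, (i.+1 < n)%N -> r (f i) (f i.+1)) -> sorted r (mkseq f n).
Proof.
case: n => [//|n] h; rewrite /mkseq /=.
by apply: path_mkseq => i _; rewrite add0n => hi; apply: h.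
Qed.

Lemma sorted_fin (R : realType) (E : set R) : finite_set E ->
  exists s : seq R, sorted <%R s /\ forall t, (t \in s) <-> E t.
Proof.
move=> fE; exists (sort <=%R (fset_set E)); split.
  rewrite lt_sorted_uniq_le sort_uniq sort_sorted ?andbT //; last exact: le_total.
  exact: fset_uniq.
by move=> t; rewrite mem_sort in_fset_set // inE.
Qed.

Lemma fin_fiber (R : realType) (phi : R -> R) (hfib : (fiber_sup phi < +oo)%E) (v : R) :
  finite_set [set t | phi t = v].
Proof.
have hle : (fiber_card phi v <= fiber_sup phi)%E.
  by apply: ereal_sup_ubound; exists v.
move: hle; rewrite /fiber_card; case: pselect => // fin h.
by rewrite ltNge h in hfib.
Qed.

Unset Implicit Arguments.

Theorem lemma3p3 (R : realType) (phi : R -> R)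
  (hcont : continuous phi)
  (hfib : (fiber_sup phi < +oo)%E)
  (hU : (Uphi phi < +oo)%E)
  (a b : R) (hb : 0 < b) :
  closed (phi @^-1` `[a - b, a + b]%classic) /\
  exists (r : nat) (c d : nat -> R),
    [/\ (forall i, (i < r)%N -> c i <= d i),
        (forall i j, (i < r)%N -> (j < r)%N -> i <> j ->
           `[c i, d i]%classic `&` `[c j, d j]%classic = set0),
        phi @^-1` `[a - b, a + b]%classic = \bigcup_(i in `I_r) `[c i, d i]%classic,
        (\sum_(i < r) (d i - c i)%:E <= (2 * (Num.ceil b)%:~R)%:E * Uphi phi)%E
      & ((r%:R)%:E <= fiber_sup phi)%E].
Proof.
set S := phi @^-1` `[a - b, a + b]%classic.
have inS t : S t <-> a - b <= phi t <= a + b by rewrite /S /= in_itv.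
have mS : measurable S.
  apply: measurable_realfun.closed_measurable.
  apply: preimage_closed; first by move=> ? _; exact: hcont.
  exact: interval_closed.
split.
  apply: preimage_closed; first by move=> ? _; exact: hcont.
  exact: interval_closed.
have hSb := @S_bound R phi hcont a b hb.
have U0 : (0 <= Uphi phi)%E.
  apply: le_trans (measure_ge0 (@lebesgue_measure R) (phi @^-1` `[0, 0 + 1]%classic)) _.
  by apply: ereal_sup_ubound; exists 0.
have hSfin : (@lebesgue_measure R S < +oo)%E.
  apply: le_lt_trans hSb _.
  rewrite -(fineK (x := Uphi phi)); first by rewrite -EFinM ltry.
  by rewrite ge0_fin_numE.
pose E z := phi z = a - b \/ phi z = a + b.
pose ins z := (a - b < phi z) && (phi z < a + b).
have SE t : E t -> S t.
  by move=> [] h; apply/inS; rewrite h; apply/andP; split; lra.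
have Sins t : ~ E t -> S t <-> ins t.
  move=> nE; rewrite inS /ins; split => /andP[h1 h2]; apply/andP; split.
  - by rewrite lt_neqAle h1 andbT; apply/eqP => e; apply: nE; left.
  - by rewrite lt_neqAle h2 andbT; apply/eqP => e; apply: nE; right.
  - exact: ltW.
  - exact: ltW.
have sc x y : x <= y -> (forall z, x <= z <= y -> ~ E z) -> ins x = ins y.
  move=> xy hz.
  have nv v : (v = a - b \/ v = a + b) -> forall z, x <= z <= y -> phi z != v.
    move=> hv z hz'; apply/eqP => e; apply: (hz z hz'); rewrite /E e; tauto.
  have e1 := @sc_thr R phi hcont x y _ xy (nv _ (or_introl erefl)).
  have e2 := @sc_thr R phi hcont x y _ xy (nv _ (or_intror erefl)).
  have nx : phi x != a - b by apply: (nv _ (or_introl erefl)); rewrite lexx xy.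
  have ny : phi y != a - b by apply: (nv _ (or_introl erefl)); rewrite lexx xy.
  have hx : (a - b < phi x) = ~~ (phi x < a - b) by rewrite ltNge le_eqVlt (negbTE nx).
  have hy : (a - b < phi y) = ~~ (phi y < a - b) by rewrite ltNge le_eqVlt (negbTE ny).
  by rewrite /ins hx hy e1 e2.
have rayL t : S t -> (forall z, z <= t -> ~ E z) -> False.
  move=> St hz.
  have nEt := hz t (lexx t).
  have it : ins t by apply/(Sins t nEt).
  have sub : `]-oo, t]%classic `<=` S.
    move=> z; rewrite /= in_itv /= => zt.
    apply/(Sins z (hz z zt)); rewrite (sc z t zt) // => w /andP[_ wt]; exact: hz.
  have h : (@lebesgue_measure R `]-oo, t]%classic <= @lebesgue_measure R S)%E.
    by apply: le_measure => //; rewrite inE; [exact: measurable_itv | exact: mS].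
  by rewrite ray_l_inf in h; rewrite ltNge h in hSfin.
have rayR t : S t -> (forall z, t <= z -> ~ E z) -> False.
  move=> St hz.
  have nEt := hz t (lexx t).
  have it : ins t by apply/(Sins t nEt).
  have sub : `[t, +oo[%classic `<=` S.
    move=> z; rewrite /= in_itv /= andbT => zt.
    apply/(Sins z (hz z zt)); rewrite -(sc t z zt) // => w /andP[tw _]; exact: hz.
  have h : (@lebesgue_measure R `[t, +oo[%classic <= @lebesgue_measure R S)%E.
    by apply: le_measure => //; rewrite inE; [exact: measurable_itv | exact: mS].
  by rewrite ray_r_inf in h; rewrite ltNge h in hSfin.
have fE : finite_set E.
  have -> : E = [set t | phi t = a - b] `|` [set t | phi t = a + b] by [].
  by rewrite finite_setU; split; apply: fin_fiber.
have [s [ss memS]] := @sorted_fin R E fE.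
pose m := size s.
pose e k := nth 0 s k.
have eE k : (k < m)%N -> E (e k) by move=> km; apply/memS; rewrite mem_nth.
have Ee t : E t -> exists2 k, (k < m)%N & t = e k.
  move=> /memS ts; exists (index t s); first by rewrite index_mem.
  by rewrite /e nth_index.
have elt i j : (i < m)%N -> (j < m)%N -> (e i < e j) = (i < j)%N.
  by move=> im jm; apply: (lt_sorted_ltn_nth 0 ss).
have ele i j : (i < m)%N -> (j < m)%N -> (e i <= e j) = (i <= j)%N.
  by move=> im jm; apply: (lt_sorted_leq_nth 0 ss).
have fib0 : ((0%:R)%:E <= fiber_sup phi)%E.
  by apply: (@fiber_le R phi hfib 0 [::]).
case: (posnP m) => m0.
  have S0 t : ~ S t.
    move=> St; apply: (rayL t St) => z _ /Ee [k]; by rewrite m0.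
  exists 0%N, (fun _ => 0), (fun _ => 0); split => //.
  - apply/seteqP; split => t; first by move=> /S0.
    by case=> i.
  - by rewrite big_ord0 mule_ge0 // lee_fin mulr_ge0 // ler0z ceil_ge0 (lt_trans _ hb) // ltrN10.
pose M := m.-1.
have mM : m = M.+1 by rewrite /M prednK.
pose mu k := (e k + e k.+1) / 2.
have mu1 k : (k < M)%N -> e k < mu k.
  move=> kM; have : e k < e k.+1 by rewrite elt // mM ?ltnS ?(ltnW kM).
  rewrite /mu; lra.
have mu2 k : (k < M)%N -> mu k < e k.+1.
  move=> kM; have : e k < e k.+1 by rewrite elt // mM ?ltnS ?(ltnW kM).
  rewrite /mu; lra.
have noE k z : (k < M)%N -> e k < z < e k.+1 -> ~ E z.
  move=> kM /andP[z1 z2] /Ee [j jm ez]; rewrite ez in z1 z2.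
  rewrite elt // ?mM ?ltnS ?(ltnW kM) // in z1.
  by rewrite elt // ?mM ?ltnS // leqNgt z1 in z2.
have gap_ins k t : (k < M)%N -> e k < t < e k.+1 -> ins t = ins (mu k).
  move=> kM /andP[t1 t2].
  case: (leP t (mu k)) => h.
    apply: sc => // z /andP[z1 z2]; apply: (noE k) => //.
    by rewrite (lt_le_trans t1 z1) (le_lt_trans z2 (mu2 k kM)).
  apply/esym; apply: sc; first exact: ltW.
  move=> z /andP[z1 z2]; apply: (noE k) => //.
  by rewrite (lt_le_trans (mu1 k kM) z1) (le_lt_trans z2 t2).
have e0le t : E t -> e 0%N <= t.
  by move=> /Ee [k km ->]; rewrite ele // mM.
have eMge t : E t -> t <= e M.
  by move=> /Ee [k km ->]; rewrite ele // ?mM // -ltnS -mM.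
have nSl t : t < e 0%N -> ~ S t.
  move=> h St; apply: (rayL t St) => z zt /e0le; rewrite leNgt (le_lt_trans zt h) //.
have nSr t : e M < t -> ~ S t.
  move=> h St; apply: (rayR t St) => z zt /eMge; rewrite leNgt (lt_le_trans h zt) //.
have loc t : ~ E t -> e 0%N < t -> t < e M -> exists k, (k < M)%N /\ e k < t < e k.+1.
  move=> nE t0 tM.
  pose j := find (fun x => t < x) s.
  have hs : has (fun x => t < x) s.
    by apply/hasP; exists (e M); [rewrite mem_nth // -/m mM | exact: tM].
  have jm : (j < m)%N by rewrite -has_find.
  have tj : t < e j := nth_find 0 hs.
  have [k hk] : exists k, j = k.+1.
    case hj: j => [|k]; last by exists k.
    by move: tj; rewrite hj => /(lt_trans t0); rewrite ltxx.
  have km : (k < m)%N by rewrite (ltn_trans _ jm) // hk.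
  exists k; split; first by rewrite -ltnS -hk -mM.
  have bk := @before_find _ 0 (fun x => t < x) s k.
  rewrite -/j hk ltnSn in bk; have {}bk := bk isT.
  rewrite -hk tj andbT lt_neqAle leNgt bk andbT.
  by apply/eqP => ekt; apply: nE; rewrite -ekt; apply: eE.
pose bs := [seq k <- iota 0 M | ~~ ins (mu k)].
have hbs : sorted ltn bs.
  by apply: sorted_filter; [exact: ltn_trans | exact: iota_ltn_sorted].
have mbs k : (k \in bs) = (k < M)%N && ~~ ins (mu k).
  by rewrite mem_filter mem_iota add0n andbC.
have hba : all (fun x => x < M)%N bs.
  by apply/allP => k; rewrite mbs => /andP[].
pose nb := size bs.
pose lo := blo bs. pose hi := bhi bs M.
pose c i := e (lo i). pose d i := e (hi i).
have F1' i : (i <= nb)%N -> (lo i <= hi i)%N /\ (hi i <= M)%N := @F1 bs M i hbs hba.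
have hiM i : (i <= nb)%N -> (hi i < m)%N by move=> /F1' [_ h]; rewrite mM ltnS.
have loM i : (i <= nb)%N -> (lo i < m)%N by move=> h; have [h1 _] := F1' i h; exact: leq_ltn_trans h1 (hiM i h).
have cd i : (i <= nb)%N -> c i <= d i.
  by move=> h; rewrite /c /d ele ?loM ?hiM //; case: (F1' i h).
have hlt i j : (i < j)%N -> (j <= nb)%N -> d i < c j.
  move=> ij jn; have inb : (i <= nb)%N by rewrite ltnW // (leq_trans ij jn).
  by rewrite /c /d elt ?loM ?hiM // (@F2 bs M i j hbs) // ij jn.
have F4' k : (k < m)%N -> exists2 i, (i <= nb)%N & (lo i <= k <= hi i)%N.
  by move=> km; apply: (@F4 bs M k hbs hba); rewrite -ltnS -mM.
have hSU : S = \bigcup_(i in `I_nb.+1) `[c i, d i]%classic.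
  apply/seteqP; split => t.
  - move=> St.
    case: (pselect (E t)) => [Et | nEt].
      have [k km ekt] := Ee t Et.
      have [i inb /andP[h1 h2]] := F4' k km.
      exists i; first by rewrite /= ltnS.
      by rewrite /= in_itv /= /c /d ekt !ele ?loM ?hiM ?h1 ?h2.
    have t0 : e 0%N < t.
      rewrite ltNge; apply/negP => h.
      have h' : t < e 0%N.
        by rewrite lt_neqAle h andbT; apply/eqP => et; apply: nEt; rewrite et; apply: eE; rewrite mM.
      exact: (nSl t h' St).
    have tM : t < e M.
      rewrite ltNge; apply/negP => h.
      have h' : e M < t.
        by rewrite lt_neqAle h andbT; apply/eqP => et; apply: nEt; rewrite -et; apply: eE; rewrite mM.
      exact: (nSr t h' St).
    have [k [kM /andP[t1 t2]]] := loc t nEt t0 tM.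
    have ik : ins (mu k).
      by rewrite -(gap_ins k t kM); [apply/(Sins t nEt) | rewrite t1 t2].
    have knb : k \notin bs by rewrite mbs ik andbF.
    have km : (k < m)%N by rewrite mM ltnW // ltnS.
    have [i inb /andP[h1 h2]] := F4' k km.
    have h3 : (k < hi i)%N.
      rewrite ltn_neqAle h2 andbT; apply/eqP => ekh.
      have : (hi i < M)%N by rewrite -ekh.
      by move=> /(@F5 bs M i); rewrite -/(hi i) -ekh (negbTE knb).
    exists i; first by rewrite /= ltnS.
    rewrite /= in_itv /= /c /d; apply/andP; split.
      by apply: le_trans (ltW t1); rewrite ele ?loM // (ltn_trans kM) // mM.
    apply: (@le_trans _ _ (e k.+1)); first exact: ltW.
    by rewrite ele ?hiM // mM ltnS.
  - case=> i /=; rewrite ltnS => inb; rewrite in_itv /= => /andP[h1 h2].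
    case: (pselect (E t)) => [Et | nEt]; first exact: SE.
    have ci : c i < t.
      by rewrite lt_neqAle h1 andbT; apply/eqP => et; apply: nEt; rewrite -et; apply: eE; rewrite loM.
    have td : t < d i.
      by rewrite lt_neqAle h2 andbT; apply/eqP => et; apply: nEt; rewrite et; apply: eE; rewrite hiM.
    have t0 : e 0%N < t by apply: le_lt_trans ci; rewrite ele ?loM // mM.
    have tM : t < e M by apply: lt_le_trans td _; rewrite ele ?hiM // ?mM //; case: (F1' i inb).
    have [k [kM /andP[t1 t2]]] := loc t nEt t0 tM.
    have km : (k < m)%N by rewrite mM ltnW // ltnS.
    have h3 : (lo i <= k)%N.
      by rewrite -ltnS -(elt (lo i) k.+1) ?loM ?(lt_trans ci t2) // mM ltnS.
    have h4 : (k < hi i)%N.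
      by rewrite -(elt k (hi i)) ?hiM // (lt_trans t1 td).
    have knb := @F3 bs M i k hbs hba inb (introT andP (conj h3 h4)).
    have ik : ins (mu k) by move: knb; rewrite mbs kM /= negbK.
    by apply/(Sins t nEt); rewrite (gap_ins k t kM) // t1 t2.
have hcount : ((nb.+1%:R)%:E <= fiber_sup phi)%E.
  pose w j := if j is j'.+1 then (if (j' < nb)%N then mu (nth 0 bs j') else e M + 1) else e 0%N - 1.
  have W1 j : (j <= nb.+1)%N -> ~ S (w j).
    case: j => [_|j jn] /=.
      by apply: nSl; lra.
    case: ifP => jnb.
      have : nth 0 bs j \in bs by rewrite mem_nth.
      rewrite mbs => /andP[kM nik].
      have nE : ~ E (mu (nth 0 bs j)) by apply: (noE _ _ kM); rewrite mu1 ?mu2.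
      by move=> /(Sins _ nE); apply/negP.
    by apply: nSr; lra.
  have Wc i : (i <= nb)%N -> w i < c i.
    case: i => [_|i inb] /=.
      by rewrite /c /lo /=; lra.
    rewrite inb /c /lo /=; apply: mu2.
    exact: (@beta_lt bs M i hba inb).
  have Wd i : (i <= nb)%N -> d i < w i.+1.
    move=> inb /=; rewrite /d /hi /bhi -/nb; case: ifP => h.
      by apply: mu1; apply: (@beta_lt bs M i hba h).
    lra.
  have outS t : ~ S t -> ~~ (a + b < phi t) -> phi t < a - b.
    move=> nSt h; rewrite ltNge; apply/negP => h'; apply: nSt; apply/inS.
    by rewrite h' /= leNgt.
  pose g t := if a + b < phi t then phi t - (a + b) else (a - b) - phi t.
  have gpos t : ~ S t -> 0 < g t.
    move=> nSt; rewrite /g; case: ifP => h; first lra.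
    by have := outS t nSt (negbT h); lra.
  have [δ δ0 hδ] := @pos_min R (fun j => g (w j)) nb.+1 (fun j hj => gpos _ (W1 j hj)).
  pose Y t := if a + b < phi t then a + b + δ else a - b - δ.
  have betw p q : S p -> ~ S q -> δ < g q -> (phi p < Y q < phi q) || (phi q < Y q < phi p).
    move=> /inS /andP[p1 p2] nq; rewrite /g /Y; case: ifP => h hd.
      by apply/orP; left; apply/andP; split; lra.
    have := outS q nq (negbT h) => h2.
    by apply/orP; right; apply/andP; split; lra.
  have Yv q : Y q = a + b + δ \/ Y q = a - b - δ by rewrite /Y; case: ifP; tauto.
  have side1 p q : p < q -> S p -> ~ S q -> δ < g q -> exists z, p < z < q /\ phi z = Y q.
    move=> pq Sp nSq hd; apply: (ivt_strict hcont pq); apply: between; exact: betw.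
  have side2 p q : q < p -> S p -> ~ S q -> δ < g q -> exists z, q < z < p /\ phi z = Y q.
    move=> qp Sp nSq hd; apply: (ivt_strict hcont qp); apply: between; rewrite orbC; exact: betw.
  have SC i : (i <= nb)%N -> S (c i) by move=> h; apply: SE; apply: eE; exact: loM.
  have SD i : (i <= nb)%N -> S (d i) by move=> h; apply: SE; apply: eE; exact: hiM.
  pose lower sx := if odd sx then d sx./2 else w sx./2.
  pose upper sx := if odd sx then w (sx./2).+1 else c sx./2.
  have hz sx : exists z, (sx < (nb.+1).*2)%N ->
      lower sx < z < upper sx /\ (phi z = a + b + δ \/ phi z = a - b - δ).
    case: (ltnP sx (nb.+1).*2) => hs; last by exists 0.
    have inb : (sx./2 <= nb)%N by rewrite -ltnS ltn_half_double.
    rewrite /lower /upper; case: ifP => od.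
      have [z [hz1 hz2]] := side1 (d sx./2) (w sx./2.+1) (Wd _ inb) (SD _ inb) (W1 _ (inb : (sx./2.+1 <= nb.+1)%N)) (hδ _ (inb : (sx./2.+1 <= nb.+1)%N)).
      by exists z => _; split => //; rewrite hz2.
    have [z [hz1 hz2]] := side2 (c sx./2) (w sx./2) (Wc _ inb) (SC _ inb) (W1 _ (leqW inb)) (hδ _ (leqW inb)).
    by exists z => _; split => //; rewrite hz2.
  have [z hzP] := boolp.choice hz.
  pose zs := mkseq z (nb.+1).*2.
  have zsort : sorted <%R zs.
    apply: sorted_mkseq => sx hs.
    have hs' : (sx < (nb.+1).*2)%N by apply: ltnW.
    have [/andP[l1 u1] _] := hzP sx hs'.
    have [/andP[l2 u2] _] := hzP sx.+1 hs.
    have inb : (sx./2 <= nb)%N by rewrite -ltnS ltn_half_double.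
    move: l1 u1 l2 u2; rewrite /lower /upper /= uphalf_half.
    case: (odd sx) => /= l1 u1 l2 u2.
      by rewrite add0n in l2; exact: lt_trans u1 l2.
    rewrite add0n in l2.
    by apply: lt_trans u1 _; apply: le_lt_trans l2; exact: cd.
  have zuniq : uniq zs := lt_sorted_uniq zsort.
  have zin t : t \in zs -> phi t = a + b + δ \/ phi t = a - b - δ.
    rewrite /zs /mkseq => /mapP [sx]; rewrite mem_iota add0n => /andP[_ hs] ->.
    exact: (hzP sx hs).2.
  pose P := fun t => phi t == a + b + δ.
  have hsz : (size (seq.filter P zs) + size (seq.filter (predC P) zs) = (nb.+1).*2)%N.
    by rewrite !size_filter count_predC size_mkseq.
  have L1 : (((size (seq.filter P zs))%:R)%:E <= fiber_sup phi)%E.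
    apply: (@fiber_le R phi hfib (a + b + δ)); first exact: filter_uniq.
    by move=> t; rewrite mem_filter => /andP[/eqP].
  have L2 : (((size (seq.filter (predC P) zs))%:R)%:E <= fiber_sup phi)%E.
    apply: (@fiber_le R phi hfib (a - b - δ)); first exact: filter_uniq.
    move=> t; rewrite mem_filter => /andP[nP /zin []] // h.
    by move: nP; rewrite /= /P h eqxx.
  case: (leqP nb.+1 (size (seq.filter P zs))) => h.
    by apply: le_trans L1; rewrite lee_fin ler_nat.
  apply: le_trans L2; rewrite lee_fin ler_nat.
  move: hsz h; rewrite -addnn.
  set u := size _; set v := size _ => huv h.
  by rewrite -(leq_add2l u) huv leq_add2r ltnW.
have disj i j : (i <= nb)%N -> (j <= nb)%N -> i <> j ->
    `[c i, d i]%classic `&` `[c j, d j]%classic = set0.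
  move=> hi' hj' nij.
  apply/seteqP; split => // t [] /=; rewrite !in_itv /= => /andP[a1 a2] /andP[b1 b2].
  case: (ltngtP i j) => h //.
  + by have := hlt i j h hj'; lra.
  + by have := hlt j i h hi'; lra.
exists nb.+1, c, d; split.
- move=> i; rewrite ltnS => h; exact: (cd i h).
- by move=> i j; rewrite !ltnS; exact: disj.
- exact: hSU.
- have hF : \big[setU/set0]_(i < nb.+1) `[c i, d i]%classic = S by rewrite hSU bigcup_mkord.
  have tri : trivIset `I_nb.+1 (fun i => `[c i, d i]%classic).
    move=> i j /= hi' hj' [t ht]; case: (eqVneq i j) => [//|/eqP nij].
    have hi2 : (i <= nb)%N by rewrite -ltnS.
    have hj2 : (j <= nb)%N by rewrite -ltnS.
    by rewrite (disj i j hi2 hj2 nij) in ht.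
  have e1 : (\sum_(i < nb.+1) (d i - c i)%:E = @lebesgue_measure R S)%E.
    transitivity (\sum_(i < nb.+1) @lebesgue_measure R `[c i, d i]%classic)%E.
      by apply: eq_bigr => k _; rewrite seg_meas // cd // -ltnS.
    have := @measure_semi_additive_ord_I _ _ _ (@lebesgue_measure R) (fun i => `[c i, d i]%classic) nb.+1.
    rewrite hF => h; rewrite -h //.
  have e2 : ((\sum_(i < nb.+1) (d i - c i)%:E)%R = @lebesgue_measure R S) := e1.
  by rewrite e2.
- exact: hcount.
Qed.
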